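(* Let $0<\varepsilon_1<\varepsilon_2<1$ and let $\psi:[0,1]\to[0,1]$ be a strictly increasing continuous function with $\psi(\varepsilon_1)=\varepsilon_1$ and $\psi(\varepsilon_2)=\varepsilon_2$; write $\psi_1=\psi|_{[0,\varepsilon_1]}$, $\psi_2=\psi|_{[\varepsilon_1,\varepsilon_2]}$, $\psi_3=\psi|_{[\varepsilon_2,1]}$. Let $a_0=b_0=c_0=1$ and for $k\ge1$ define the $k$-fold integrals $$a_k=\Big\{{\varepsilon_1\atop 0},{\psi_1\atop 0},\dots,{\psi_1\atop 0}\Big\},\quad b_k=\Big\{{\varepsilon_2\atop \varepsilon_1},{\psi_2\atop \varepsilon_1},\dots,{\psi_2\atop \varepsilon_1}\Big\},$$ $$c_k=\Big\{{1\atop \varepsilon_2},{\psi_3\atop \varepsilon_2},\dots,{\psi_3\atop \varepsilon_2}\Big\},\quad d_k=\Big\{{1\atop 0},{\psi\atop 0},\dots,{\psi\atop 0}\Big\}.$$ Then for $n=1,2,\dots$, $$d_n=\sum_{k=0}^n c_k\sum_{l=0}^{n-k}b_l\,a_{n-k-l}.$$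
   Context: For functions (or constants) $\alpha_i,\beta_i$, the symbol $\Big\{{\alpha_1\atop\beta_1},\dots,{\alpha_n\atop\beta_n}\Big\}$ denotes the iterated integral $\int_{\beta_1}^{\alpha_1}\int_{\beta_2(x_1)}^{\alpha_2(x_1)}\cdots\int_{\beta_n(x_{n-1})}^{\alpha_n(x_{n-1})}dx_n\cdots dx_1$ (here the first limits $\alpha_1,\beta_1$ are constants). In each of $a_k,b_k,c_k,d_k$ there are $k$ entries, the first one being the constant-limit entry shown and the remaining $k-1$ entries being the repeated entry shown. *)

(* Defs.v *)
From Stdlib Require Import Reals.
From Coquelicot Require Import Coquelicot.
Open Scope R_scope.

Fixpoint inner_int (psi : R -> R) (lo : R) (m : nat) (x : R) : R :=
  match m with
  | O => 1
  | S m' => RInt (inner_int psi lo m') lo (psi x)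
  end.

(* kfold psi lo hi k = { hi/lo, psi/lo, ..., psi/lo } (k entries),
   with the convention kfold _ _ _ 0 = 1. *)
Definition kfold (psi : R -> R) (lo hi : R) (k : nat) : R :=
  match k with
  | O => 1
  | S k' => RInt (inner_int psi lo k') lo hi
  end.

(* Main.v *)
Require Import Defs.
From Stdlib Require Import Reals Lra Lia.
From Coquelicot Require Import Coquelicot.
Open Scope R_scope.

Lemma inner_kfold p lo k x : inner_int p lo k x = kfold p lo (p x) k.
Proof. destruct k; reflexivity. Qed.

Section S.
Variable p : R -> R.
Hypothesis hp : forall x, continuous p x.

Lemma inner_cont lo m x : continuous (inner_int p lo m) x.
Proof.
  revert x; induction m as [|m IH]; intros x; simpl.
  - apply continuous_const.
  - apply (continuous_comp p (fun u => RInt (inner_int p lo m) lo u)); [apply hp|].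
    apply (@ex_derive_continuous R_AbsRing R_NormedModule). exists (inner_int p lo m (p x)).
    apply (@is_derive_RInt R_CompleteNormedModule (inner_int p lo m) (fun u => RInt (inner_int p lo m) lo u) lo (p x)).
    + apply filter_forall. intros b. apply (@RInt_correct R_CompleteNormedModule), (@ex_RInt_continuous R_CompleteNormedModule). intros; apply IH.
    + apply IH.
Qed.

Lemma inner_ex lo m a b : ex_RInt (inner_int p lo m) a b.
Proof. apply (@ex_RInt_continuous R_CompleteNormedModule). intros; apply inner_cont. Qed.

Lemma sum_RInt (f : nat -> R -> R) (c : nat -> R) a b m :
  (forall k, ex_RInt (f k) a b) ->
  is_RInt (fun t => sum_f_R0 (fun k => f k t * c k) m) a b
          (sum_f_R0 (fun k => RInt (f k) a b * c k) m).
Proof.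
  intros H. induction m as [|m IH]; simpl.
  - apply (@is_RInt_ext R_NormedModule (fun t => scal (c 0%nat) (f 0%nat t))).
    + intros; unfold scal; simpl; unfold mult; simpl; ring.
    + replace (RInt (f 0%nat) a b * c 0%nat) with (scal (c 0%nat) (RInt (f 0%nat) a b))
        by (unfold scal; simpl; unfold mult; simpl; ring).
      apply (@is_RInt_scal R_NormedModule), (@RInt_correct R_CompleteNormedModule), H.
  - apply (@is_RInt_ext R_NormedModule (fun t => plus (sum_f_R0 (fun k => f k t * c k) m)
                                      (scal (c (S m)) (f (S m) t)))).
    + intros; unfold scal, plus; simpl; unfold mult; simpl; ring.
    + replace (sum_f_R0 (fun k => RInt (f k) a b * c k) m + RInt (f (S m)) a b * c (S m))
       with (plus (sum_f_R0 (fun k => RInt (f k) a b * c k) m) (scal (c (S m)) (RInt (f (S m)) a b)))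
        by (unfold scal, plus; simpl; unfold mult; simpl; ring).
      apply (@is_RInt_plus R_NormedModule); [exact IH|]. apply (@is_RInt_scal R_NormedModule), (@RInt_correct R_CompleteNormedModule), H.
Qed.

Lemma split_lemma lo mid Y
  (hmap : forall t, mid <= t <= Y -> mid <= p t <= Y) :
  forall m y, mid <= y <= Y ->
  kfold p lo y m = sum_f_R0 (fun k => kfold p mid y k * kfold p lo mid (m - k)) m.
Proof.
  induction m as [|m IH]; intros y Hy.
  - simpl. ring.
  - rewrite decomp_sum by lia. simpl Nat.pred.
    replace (kfold p mid y 0 * kfold p lo mid (S m - 0)) with (kfold p lo mid (S m))
      by (change (kfold p mid y 0) with 1; rewrite Nat.sub_0_r; apply eq_sym, Rmult_1_l).
    simpl (kfold p lo y (S m)).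
    rewrite <- (RInt_Chasles _ lo mid y) by apply inner_ex.
    unfold plus; simpl. f_equal.
    rewrite (RInt_ext _ (fun t => sum_f_R0 (fun k => kfold p mid (p t) k * kfold p lo mid (m - k)) m)).
    2:{ intros x Hx. rewrite inner_kfold. apply IH.
        rewrite Rmin_left in Hx by lra. rewrite Rmax_right in Hx by lra.
        apply hmap; lra. }
    erewrite is_RInt_unique.
    2:{ apply (sum_RInt (fun k t => kfold p mid (p t) k) (fun k => kfold p lo mid (m - k))).
        intros k. apply (ex_RInt_ext (inner_int p mid k)).
        - intros; apply inner_kfold.
        - apply inner_ex. }
    apply sum_eq. intros i _. simpl (S m - S i)%nat. f_equal.
    simpl. apply RInt_ext. intros; symmetry; apply inner_kfold.
Qed.
End S.
Definition clamp (x : R) := Rmax 0 (Rmin 1 x).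

Lemma clamp_in x : 0 <= clamp x <= 1.
Proof. unfold clamp, Rmax, Rmin; repeat destruct Rle_dec; lra. Qed.
Lemma clamp_id x : 0 <= x <= 1 -> clamp x = x.
Proof. intros; unfold clamp, Rmax, Rmin; repeat destruct Rle_dec; lra. Qed.
Lemma clamp_lip x z : Rabs (clamp z - clamp x) <= Rabs (z - x).
Proof.
  unfold clamp, Rmax, Rmin; repeat destruct Rle_dec;
  unfold Rabs; repeat destruct Rcase_abs; lra.
Qed.

Lemma clamp_lim x : filterlim clamp (locally x) (within (fun y => 0 <= y <= 1) (locally (clamp x))).
Proof.
  intros P [eps He]. exists eps. intros z Hz.
  apply He; [|apply clamp_in].
  unfold ball in *; simpl in *; unfold AbsRing_ball, abs, minus, plus, opp in *; simpl in *.
  eapply Rle_lt_trans; [apply clamp_lip|]. exact Hz.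
Qed.

Theorem lemma4p4 (eps1 eps2 : R) (psi : R -> R)
  (h1 : 0 < eps1) (h12 : eps1 < eps2) (h2 : eps2 < 1)
  (hmap : forall x, 0 <= x <= 1 -> 0 <= psi x <= 1)
  (hincr : forall x y, 0 <= x -> x < y -> y <= 1 -> psi x < psi y)
  (hcont : forall x, 0 <= x <= 1 ->
     filterlim psi (within (fun y => 0 <= y <= 1) (locally x)) (locally (psi x)))
  (hfix1 : psi eps1 = eps1) (hfix2 : psi eps2 = eps2)
  (n : nat) (hn : (1 <= n)%nat) :
  let a := kfold psi 0 eps1 in
  let b := kfold psi eps1 eps2 in
  let c := kfold psi eps2 1 in
  let d := kfold psi 0 1 in
  d n = sum_f_R0 (fun k => c k * sum_f_R0 (fun l => b l * a (n - k - l)%nat) (n - k)) n.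
Proof.
  intros a b c d.
  set (q := fun x => psi (clamp x)).
  assert (hq : forall x, continuous q x).
  { intros x. unfold q, continuous.
    eapply filterlim_comp; [apply clamp_lim|]. apply hcont, clamp_in. }
  assert (hle : forall x y, 0 <= x -> x <= y -> y <= 1 -> psi x <= psi y).
  { intros x y H0 H H2. destruct (Rle_lt_or_eq_dec _ _ H); [left; apply hincr; lra|subst; lra]. }
  assert (hqe : forall x, 0 <= x <= 1 -> q x = psi x).
  { intros; unfold q; rewrite clamp_id; auto. }
  assert (Hin : forall lo m x, 0 <= lo <= 1 -> 0 <= x <= 1 -> inner_int psi lo m x = inner_int q lo m x).
  { intros lo m. induction m as [|m IH]; intros x Hlo Hx; [reflexivity|].
    simpl. rewrite hqe by auto. apply RInt_ext. intros t Ht.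
    specialize (hmap x Hx). apply IH; auto.
    split; [apply Rle_trans with (Rmin lo (psi x))|apply Rle_trans with (Rmax lo (psi x))];
      try lra; unfold Rmin, Rmax; destruct Rle_dec; lra. }
  assert (Hk : forall lo hi k, 0 <= lo <= 1 -> 0 <= hi <= 1 -> kfold psi lo hi k = kfold q lo hi k).
  { intros lo hi [|k] Hl Hh; [reflexivity|]. simpl. apply RInt_ext. intros t Ht.
    apply Hin; auto.
    split; [apply Rle_trans with (Rmin lo hi)|apply Rle_trans with (Rmax lo hi)];
      try lra; unfold Rmin, Rmax; destruct Rle_dec; lra. }
  assert (S1 : forall m, kfold q 0 eps2 m = sum_f_R0 (fun l => kfold q eps1 eps2 l * kfold q 0 eps1 (m - l)) m).
  { intros m. apply (split_lemma q hq 0 eps1 eps2); [|lra].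
    intros t Ht. rewrite hqe by lra. split.
    - rewrite <- hfix1 at 1. apply hle; lra.
    - rewrite <- hfix2 at 1. apply hle; lra. }
  assert (S2 : kfold q 0 1 n = sum_f_R0 (fun k => kfold q eps2 1 k * kfold q 0 eps2 (n - k)) n).
  { apply (split_lemma q hq 0 eps2 1); [|lra].
    intros t Ht. rewrite hqe by lra. split.
    - rewrite <- hfix2 at 1. apply hle; lra.
    - apply hmap; lra. }
  unfold d; rewrite Hk, S2 by lra. apply sum_eq. intros k _.
  unfold c; rewrite Hk by lra. f_equal. rewrite S1. apply sum_eq. intros l _.
  unfold a, b; rewrite !Hk by lra. reflexivity.
Qed.
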